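(* Let $R$ be an integral domain which is an avoidance ring, and let $S$ be a ring with $R\subseteq S\subseteq \operatorname{Frac}(R)$. Then $S$ is an avoidance ring.
   Context: All rings are commutative with $1\neq 0$. An ideal $I$ of a ring $R$ has avoidance if whenever $I_1,\ldots,I_n$ are finitely many ideals of $R$ with $I\subseteq\bigcup_{k=1}^n I_k$, then $I\subseteq I_k$ for some $k$. A ring is an avoidance ring if every ideal of it has avoidance. *)

(* Defs.v *)
From HB Require Import structures.
From mathcomp Require Import all_boot all_order all_algebra.
From mathcomp Require Export fraction.
Set Implicit Arguments. Unset Strict Implicit. Unset Printing Implicit Defensive.
Import GRing.Theory.
Local Open Scope ring_scope.

Definition is_ideal (T : comNzRingType) (I : T -> Prop) : Prop :=
  [/\ I 0,
      (forall x y, I x -> I y -> I (x + y)),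
      (forall x, I x -> I (- x)) &
      (forall r x, I x -> I (r * x))].

Definition has_avoidance (T : comNzRingType) (I : T -> Prop) : Prop :=
  forall (n : nat) (Is : nat -> T -> Prop),
    (forall k, (k < n)%N -> is_ideal (Is k)) ->
    (forall x, I x -> exists k, (k < n)%N /\ Is k x) ->
    exists k, (k < n)%N /\ (forall x, I x -> Is k x).

Definition avoidance_ring (T : comNzRingType) : Prop :=
  forall I : T -> Prop, is_ideal I -> has_avoidance I.

(* Main.v *)
Require Import Defs.
From HB Require Import structures.
From mathcomp Require Import all_boot all_order all_algebra.
From mathcomp Require Import fraction.
From mathcomp Require Import generic_quotient.
From Stdlib Require Import Classical.
Import GRing.Theory.
Local Open Scope ring_scope.

Lemma tofE (R : idomainType) (a : R) : tofrac a = (\pi_({fraction R}) (Ratio a 1))%qT.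
Proof. by rewrite /tofrac; unlock. Qed.

Lemma den (R : idomainType) (z : {fraction R}) :
  exists a b : R, b != 0 /\ z * tofrac b = tofrac a.
Proof.
elim/quotW: z => x.
exists (\n_x), (\d_x); split; first exact: denom_ratioP.
rewrite !tofE.
have -> : (\pi_({fraction R}) x)%qT * (\pi_({fraction R}) (Ratio \d_x 1))%qT = FracField.mul (\pi_({fraction R}) x)%qT (\pi_({fraction R}) (Ratio \d_x 1))%qT by [].
rewrite piE; apply/eqmodP; rewrite /= FracField.equivfE /FracField.mulf.
rewrite !numden_Ratio ?mulf_neq0 ?denom_ratioP ?oner_neq0 //.
by rewrite !mulr1 mulrC.
Qed.

Lemma common_den (R : idomainType) (x : nat -> {fraction R}) (m : nat) :
  exists b : R, b != 0 /\ forall i, (i < m)%N -> exists a, x i * tofrac b = tofrac a.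
Proof.
elim: m => [|m [b [bn Hb]]].
  by exists 1; split; [exact: oner_neq0|].
have [a' [b' [bn' Hb']]] := @den _ (x m).
exists (b * b'); split; first by rewrite mulf_neq0.
move=> i; rewrite ltnS leq_eqVlt => /orP [/eqP ->|Hi].
  by exists (a' * b); rewrite rmorphM mulrCA Hb' -rmorphM mulrC.
have [a Ha] := Hb i Hi.
by exists (a * b'); rewrite rmorphM mulrA Ha -rmorphM.
Qed.

Theorem theorem3p13 (R : idomainType) (S : comNzRingType)
    (f : {rmorphism R -> S}) (g : {rmorphism S -> {fraction R}}) :
  injective g ->
  (forall x : R, g (f x) = tofrac x) ->
  avoidance_ring R ->
  avoidance_ring S.
Proof.
move=> ginj gf avR J [J0 JD JN JM] n Is HIs Hcov.
apply: NNPP => Hno.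
have Hbad : forall k, (k < n)%N -> exists x, J x /\ ~ Is k x.
  move=> k Hk; apply: NNPP => H; apply: Hno; exists k; split => // x Jx.
  by apply: NNPP => Hx; apply: H; exists x.
have [x Hx] : exists x : nat -> S, forall i, (i < n)%N -> J (x i) /\ ~ Is i (x i).
  suff : forall m, (m <= n)%N -> exists x : nat -> S,
      forall i, (i < m)%N -> J (x i) /\ ~ Is i (x i) by apply.
  elim => [|m IH] Hm; first by exists (fun _ => 0).
  have [x Hx] := IH (ltnW Hm).
  have [y [Jy Iy]] := Hbad m Hm.
  exists (fun i => if i == m then y else x i) => i.
  rewrite ltnS leq_eqVlt => /orP [/eqP ->|Hi]; first by rewrite eqxx.
  by rewrite (ltn_eqF Hi); apply: Hx.
have [b [bn Hb]] := @common_den _ (fun i => g (x i)) n.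
have tbn : tofrac b != 0 by rewrite tofrac_eq0.
pose K := fun r : R => exists s, J s /\ g s * tofrac b = tofrac r.
pose Ks := fun k (r : R) => exists s, J s /\ Is k s /\ g s * tofrac b = tofrac r.
have Kid : is_ideal K.
  split.
  - by exists 0; rewrite rmorph0 mul0r rmorph0.
  - move=> r1 r2 [s1 [J1 E1]] [s2 [J2 E2]]; exists (s1 + s2).
    by rewrite rmorphD mulrDl E1 E2 rmorphD; split => //; apply: JD.
  - move=> r1 [s1 [J1 E1]]; exists (- s1).
    by rewrite rmorphN mulNr E1 rmorphN; split => //; apply: JN.
  - move=> r r1 [s1 [J1 E1]]; exists (f r * s1).
    by rewrite rmorphM gf -mulrA E1 -rmorphM; split => //; apply: JM.
have Ksid : forall k, (k < n)%N -> is_ideal (Ks k).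
  move=> k Hk; have [I0 ID IN IM] := HIs k Hk; split.
  - by exists 0; rewrite rmorph0 mul0r rmorph0.
  - move=> r1 r2 [s1 [J1 [I1 E1]]] [s2 [J2 [I2 E2]]]; exists (s1 + s2).
    rewrite rmorphD mulrDl E1 E2 rmorphD; split; first exact: JD.
    by split => //; apply: ID.
  - move=> r1 [s1 [J1 [I1 E1]]]; exists (- s1).
    rewrite rmorphN mulNr E1 rmorphN; split; first exact: JN.
    by split => //; apply: IN.
  - move=> r r1 [s1 [J1 [I1 E1]]]; exists (f r * s1).
    rewrite rmorphM gf -mulrA E1 -rmorphM; split; first exact: JM.
    by split => //; apply: IM.
have Kcov : forall r, K r -> exists k, (k < n)%N /\ Ks k r.
  move=> r [s [Js E]]; have [k [Hk Iks]] := Hcov s Js.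
  by exists k; split => //; exists s.
have [k [Hk HK]] := avR K Kid n Ks Ksid Kcov.
have [Jxk nIxk] := Hx k Hk.
have [a Ha] := Hb k Hk.
have [s [_ [Iks Es]]] := HK a (ex_intro _ (x k) (conj Jxk Ha)).
apply: nIxk; suff <- : s = x k by [].
apply: ginj; apply: (mulIf tbn); by rewrite Es Ha.
Qed.
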